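(* Let $d\ge 5$ and let $\mathcal A_1,\dots,\mathcal A_d\subset 2^{[n]}$ be pairwise cross-IU families (for all $i\ne j$ and all $A\in\mathcal A_i$, $B\in\mathcal A_j$: $A\cap B\neq\emptyset$ and $A\cup B\neq[n]$) with $|\mathcal A_1|\ge|\mathcal A_2|\ge\dots\ge|\mathcal A_d|$. Then $$|\mathcal A_1|+\dots+|\mathcal A_d|\le d\,2^{n-2}.$$ Moreover, the inequality is strict unless $\mathcal A_1=\dots=\mathcal A_d$.
   Context: $[n]=\{1,\dots,n\}$ and $2^{[n]}$ is its power set. *)

(* Defs.v *)
From mathcomp Require Import all_boot.
Set Implicit Arguments. Unset Strict Implicit. Unset Printing Implicit Defensive.

Definition cross_IU (n : nat) (F G : {set {set 'I_n}}) : Prop :=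
  forall A B, A \in F -> B \in G -> A :&: B != set0 /\ A :|: B != setT.

Definition pairwise_cross_IU (n d : nat) (F : 'I_d -> {set {set 'I_n}}) : Prop :=
  forall i j : 'I_d, i != j -> cross_IU (F i) (F j).

(* Main.v *)
Require Import Defs.
From mathcomp Require Import all_boot zify.
From mathcomp Require Import ring.
Set Implicit Arguments. Unset Strict Implicit. Unset Printing Implicit Defensive.

Section Harris.
Variable T : finType.

Lemma split_sum (f : {set T} -> nat) (K W : {set T}) x : x \in K ->
  \sum_(S : {set T} | S \subset K) f (S :|: W) =
  \sum_(S : {set T} | S \subset K :\ x) f (S :|: W) + \sum_(S : {set T} | S \subset K :\ x) f (S :|: (x |: W)).
Proof.
move=> xK; rewrite (bigID (fun S : {set T} => x \in S)) /= addnC; congr (_ + _).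
  by apply: eq_bigl => S; rewrite subsetD1.
rewrite (reindex_onto (fun S : {set T} => x |: S) (fun S => S :\ x)) /=; last first.
  by move=> S /andP[_ xS]; rewrite setD1K.
apply: eq_big => [S|S _]; last by rewrite setUCA setUA.
rewrite subsetD1 setU11 andbT; case xS: (x \in S) => /=.
  rewrite andbF; apply/negbTE/negP => /andP[_ /eqP e].
  have : x \in (x |: S) :\ x by rewrite e.
  by rewrite setD11.
by rewrite setU1K ?(negbT xS) // eqxx !andbT subUset sub1set xK.
Qed.

Lemma harris (u v : {set T} -> nat) :
  (forall A B : {set T}, A \subset B -> u A <= u B) ->
  (forall A B : {set T}, A \subset B -> v B <= v A) ->
  forall K W : {set T}, 2 ^ #|K| * \sum_(S : {set T} | S \subset K) (u (S :|: W) * v (S :|: W)) <=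
   (\sum_(S : {set T} | S \subset K) u (S :|: W)) * (\sum_(S : {set T} | S \subset K) v (S :|: W)).
Proof.
move=> hu hv K; move: {2}#|K| (erefl #|K|) => k; elim: k K => [|k IH] K hK W.
  have K0 : K = set0 by apply/eqP; rewrite -cards_eq0 hK.
  subst K.
  have e : forall f : {set T} -> nat, \sum_(S : {set T} | S \subset set0) f (S :|: W) = f W.
    move=> f; rewrite (eq_bigl (pred1 set0)); first by rewrite big_pred1_eq set0U.
    by move=> S; rewrite subset0.
  by rewrite cards0 expn0 mul1n (e (fun S => u S * v S)) !e.
have : K != set0 by rewrite -cards_eq0 hK.
case/set0Pn => x xK.
have hK' : #|K :\ x| = k by move: hK; rewrite (cardsD1 x) xK add1n => -[].
rewrite hK (split_sum (fun S => u S * v S) _ xK) !(split_sum _ _ xK) expnS.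
have I1 := IH _ hK' W; have I2 := IH _ hK' (x |: W).
set U0 := \sum_(S : {set T} | S \subset K :\ x) u (S :|: W) in I1 *.
set U1 := \sum_(S : {set T} | S \subset K :\ x) u (S :|: (x |: W)) in I2 *.
set V0 := \sum_(S : {set T} | S \subset K :\ x) v (S :|: W) in I1 *.
set V1 := \sum_(S : {set T} | S \subset K :\ x) v (S :|: (x |: W)) in I2 *.
have hU : U0 <= U1 by apply: leq_sum => S _; apply: hu; apply: setUS; apply: subsetUr.
have hV : V1 <= V0 by apply: leq_sum => S _; apply: hv; apply: setUS; apply: subsetUr.
set P0 := \sum_(S : {set T} | S \subset K :\ x) _ in I1 *.
set P1 := \sum_(S : {set T} | S \subset K :\ x) _ in I2 *.
rewrite hK' in I1 I2.
have key : U0 * V0 + U1 * V1 <= U1 * V0 + U0 * V1 by nia.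
move: (2 ^ k) I1 I2 => p I1 I2.
nia.
Qed.

Lemma sum_ind (X : {set {set T}}) :
  \sum_(S : {set T} | S \subset setT) ((S :|: set0) \in X : nat) = #|X|.
Proof.
rewrite -sum1_card [RHS]big_mkcond /=; apply: eq_big => [S|S _]; first by rewrite subsetT.
by rewrite setU0; case: (S \in X).
Qed.

Lemma card_setT : #|{set T}| = 2 ^ #|T|.
Proof. by rewrite -[LHS]cardsT -powersetT card_powerset cardsT. Qed.

Lemma harris_sets (U D : {set {set T}}) :
  (forall A B : {set T}, A \subset B -> A \in U -> B \in U) ->
  (forall A B : {set T}, A \subset B -> B \in D -> A \in D) ->
  2 ^ #|T| * #|U :&: D| <= #|U| * #|D|.
Proof.
move=> hU hD.
have := @harris (fun S => (S \in U : nat)) (fun S => (S \in D : nat)) _ _ setT set0.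
rewrite !sum_ind cardsT.
rewrite (eq_bigr (fun S : {set T} => ((S :|: set0) \in U :&: D : nat))); last first.
  by move=> S _; rewrite inE mulnb.
rewrite sum_ind; apply.
  by move=> A B sAB; case AU: (A \in U) => //=; rewrite (hU _ _ sAB AU).
by move=> A B sAB; case BD: (B \in D) => //=; rewrite (hD _ _ sAB BD).
Qed.

Lemma card_cpl (X : {set {set T}}) :
  #|[set S : {set T} | ~: S \notin X]| + #|X| = 2 ^ #|T|.
Proof.
have -> : [set S : {set T} | ~: S \notin X] = ~: ((@setC T) @^-1: X).
  by apply/setP => S; rewrite !inE.
by rewrite addnC -{1}(card_preimset X (@setC_inj T)) cardsC card_setT.
Qed.

End Harris.

Definition perp n (X : {set {set 'I_n}}) : {set {set 'I_n}} :=
  [set S | [forall T in X, (S :&: T != set0) && (S :|: T != setT)]].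

Lemma covers n (S T : {set 'I_n}) : ~: S \subset T -> S :|: T = setT.
Proof.
move=> h; apply/eqP; rewrite eqEsubset subsetT /=; apply/subsetP => y _.
rewrite inE; case yS: (y \in S) => //=; apply: (subsetP h); by rewrite inE yS.
Qed.

Lemma cross_sum n (A B : {set {set 'I_n}}) : cross_IU A B -> #|A| + #|B| <= 2 ^ n.
Proof.
move=> h.
have sB : B \subset [set S : {set 'I_n} | ~: S \notin A].
  apply/subsetP => S SB; rewrite inE; apply/negP => SA.
  have [h1 _] := h _ _ SA SB; move: h1; by rewrite setIC setICr eqxx.
have := card_cpl A; rewrite card_ord => <-.
by rewrite addnC leq_add2r; apply: subset_leq_card.
Qed.

Lemma cross_prod n (A B : {set {set 'I_n}}) : cross_IU A B ->
  16 * (#|A| * #|B|) <= 2 ^ n * 2 ^ n.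
Proof.
move=> h.
set P := [set S : {set 'I_n} | [exists T in B, T \subset S]].
set Q := [set S : {set 'I_n} | [exists T in B, S \subset T]].
set P' := [set S : {set 'I_n} | ~: S \notin P].
set Q' := [set S : {set 'I_n} | ~: S \notin Q].
have hPu : forall A B : {set 'I_n}, A \subset B -> A \in P -> B \in P.
  move=> X Y sXY; rewrite !inE => /existsP[T /andP[TB sTX]].
  by apply/existsP; exists T; rewrite TB (subset_trans sTX sXY).
have hQd : forall A B : {set 'I_n}, A \subset B -> B \in Q -> A \in Q.
  move=> X Y sXY; rewrite !inE => /existsP[T /andP[TB sTX]].
  by apply/existsP; exists T; rewrite TB (subset_trans sXY sTX).
have hP'u : forall A B : {set 'I_n}, A \subset B -> A \in P' -> B \in P'.
  move=> X Y sXY; rewrite !inE; apply: contra.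
  move/existsP => [T /andP[TB sT]]; apply/existsP; exists T.
  by rewrite TB (subset_trans sT) // setCS.
have hQ'd : forall A B : {set 'I_n}, A \subset B -> B \in Q' -> A \in Q'.
  move=> X Y sXY; rewrite !inE; apply: contra.
  move/existsP => [T /andP[TB sT]]; apply/existsP; exists T.
  by rewrite TB (subset_trans _ sT) // setCS.
have sB : B \subset P :&: Q.
  by apply/subsetP => S SB; rewrite !inE; apply/andP; split; apply/existsP; exists S; rewrite SB subxx.
have sA : A \subset P' :&: Q'.
  apply/subsetP => S SA; rewrite !inE; apply/andP; split; apply/negP;
    move/existsP => [T /andP[TB sT]]; have [h1 h2] := h _ _ SA TB.
    move: h1; rewrite setI_eq0 disjoint_sym disjoints_subset.
    by rewrite sT.
  by move: h2; rewrite covers ?eqxx.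
have H1 := harris_sets hPu hQd.
have H2 := harris_sets hP'u hQ'd.
rewrite card_ord in H1 H2.
have cP := card_cpl P; have cQ := card_cpl Q.
rewrite card_ord -/P' -/Q' in cP cQ.
have lA := subset_leq_card sA; have lB := subset_leq_card sB.
set M := 2 ^ n in H1 H2 cP cQ *.
set p := #|P| in H1 cP; set q := #|Q| in H1 cQ.
set p' := #|P'| in H2 cP; set q' := #|Q'| in H2 cQ.
set a := #|A| in lA *; set b := #|B| in lB *.
set x := #|P :&: Q| in H1 lB; set y := #|P' :&: Q'| in H2 lA.
have Mpos : 0 < M by rewrite expn_gt0.
have e1 : M * a * (M * b) <= (p' * q') * (p * q).
  apply: leq_mul; [apply: leq_trans H2; by rewrite leq_mul2l lA orbT
                  |apply: leq_trans H1; by rewrite leq_mul2l lB orbT].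
have h2 : 4 * (p * p') <= M * M.
  by rewrite -cP addnC; case: (nat_AGM2 p p') => le _.
have h3 : 4 * (q * q') <= M * M.
  by rewrite -cQ addnC; case: (nat_AGM2 q q') => le _.
have h4 : 16 * ((p' * q') * (p * q)) <= (M * M) * (M * M).
  have -> : 16 * ((p' * q') * (p * q)) = (4 * (p * p')) * (4 * (q * q')) by ring.
  exact: leq_mul.
have : (M * M) * (16 * (a * b)) <= (M * M) * (M * M).
  apply: leq_trans h4.
  have -> : M * M * (16 * (a * b)) = 16 * (M * a * (M * b)) by ring.
  by rewrite leq_mul2l e1 orbT.
by rewrite leq_pmul2l // muln_gt0 Mpos.
Qed.

Lemma perp_cross n (X : {set {set 'I_n}}) : cross_IU X (perp X).
Proof.
move=> A B AX; rewrite inE => /forallP/(_ A); rewrite AX /= => /andP[h1 h2].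
by rewrite setIC setUC h1 h2.
Qed.

Lemma sub_perp n (X Y : {set {set 'I_n}}) : cross_IU Y X -> Y \subset perp X.
Proof.
move=> h; apply/subsetP => S SY; rewrite inE; apply/forallP => T; apply/implyP => TX.
by have [h1 h2] := h _ _ SY TX; rewrite h1 h2.
Qed.

Lemma c2 a t M : 0 < M -> 16*a*t <= M*M -> a + t <= M -> M < 4*a -> 4*t <= M -> 4*a + 16*t < 5*M.
Proof. intros. nia. Qed.
Lemma c1 t M : 0 < M -> 16*t*t <= M*M -> 4*t <= M.
Proof. intros. nia. Qed.
Lemma c3 a t M d s: 0 < M -> 5 <= d -> s <= (d-1)*t -> 4*a + 16*t < 5*M -> 4*t <= M -> 4*(a+s) < d*M.
Proof. intros. nia. Qed.

Theorem corollary3p2 (n d : nat) (F : 'I_d -> {set {set 'I_n}}) :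
  5 <= d ->
  pairwise_cross_IU F ->
  (forall i j : 'I_d, i <= j -> #|F j| <= #|F i|) ->
  4 * (\sum_(i < d) #|F i|) <= d * 2 ^ n /\
  ((exists i j : 'I_d, F i != F j) -> 4 * (\sum_(i < d) #|F i|) < d * 2 ^ n).
Proof.
move=> hd hc hm.
set M := 2 ^ n.
have Mpos : 0 < M by rewrite expn_gt0.
have prod i j : i != j -> 16 * (#|F i| * #|F j|) <= M * M by move=> ij; apply: cross_prod; apply: hc.
have sumb i j : i != j -> #|F i| + #|F j| <= M by move=> ij; apply: cross_sum; apply: hc.
have d0 : 0 < d by apply: leq_trans hd.
have d1 : 1 < d by apply: leq_trans hd.
have d2 : 2 < d by apply: leq_trans hd.
pose i0 := Ordinal d0; pose i1 := Ordinal d1; pose i2 := Ordinal d2.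
have n01 : i0 != i1 by [].
have n02 : i0 != i2 by [].
have n12 : i1 != i2 by [].
set a := #|F i0|; set t := #|F i1|.
have ha : forall i, #|F i| <= a by move=> i; apply: hm.
have ht : forall i, i != i0 -> #|F i| <= t.
  move=> i ni; apply: hm; rewrite /= lt0n; apply: contra ni => /eqP i0'.
  by apply/eqP; apply: val_inj.
have Hall : (forall i, 4 * #|F i| = M) -> forall i j, F i = F j.
  move=> h4.
  have hp : forall i j, i != j -> F j = perp (F i).
    move=> i j ij; apply/eqP; rewrite eqEcard sub_perp; last first.
      by apply: hc; rewrite eq_sym.
    have := @cross_prod _ _ _ (@perp_cross _ (F i)).
    have := h4 i; have := h4 j.
    move: #|F i| #|F j| #|perp (F i)| => x z y hz hx hp; nia.
  have e1 : F i1 = perp (F i0) := hp _ _ n01.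
  have e2 : F i0 = perp (F i2) by apply: hp; rewrite eq_sym.
  have e3 : F i1 = perp (F i2) by apply: hp; rewrite eq_sym.
  have e01 : F i0 = F i1 by rewrite e2 e3.
  have hj : forall j, F j = F i0.
    move=> j; case: (eqVneq j i0) => [-> //|nj].
    by rewrite (hp i0 j); [rewrite -e1 -e01 | rewrite eq_sym].
  by move=> i j; rewrite !hj.
have E : 4 * (\sum_(i < d) #|F i|) = \sum_(i < d) 4 * #|F i| by rewrite big_distrr.
have dM : d * M = M + d.-1 * M by rewrite -mulSn prednK.
case: (leqP (4 * a) M) => Ha.
  have hb : forall i, 4 * #|F i| <= M.
    by move=> i; apply: leq_trans Ha; rewrite leq_mul2l ha orbT.
  have le : \sum_(i < d) 4 * #|F i| <= \sum_(i < d) M by apply: leq_sum => i _; apply: hb.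
  rewrite sum_nat_const card_ord in le.
  rewrite E; split => // - [i [j ij]].
  case: (boolP [exists k, 4 * #|F k| < M]) => [/existsP[k hk] | /existsPn hn].
    rewrite (bigD1 k) //=.
    have : \sum_(i | i != k) 4 * #|F i| <= \sum_(i | i != k) M by apply: leq_sum => i' _; apply: hb.
    rewrite sum_nat_const cardC1 card_ord => hs.
    by rewrite dM -addSn; apply: leq_add hk hs.
  have h4 : forall i, 4 * #|F i| = M.
    move=> k; apply/eqP; rewrite eqn_leq hb /=; move: (hn k); by rewrite -leqNgt.
  by move: ij; rewrite (Hall h4 i j) eqxx.
rewrite (bigD1 i0) //=.
have : \sum_(i | i != i0) #|F i| <= \sum_(i | i != i0) t by apply: leq_sum => i' ni; apply: ht.
rewrite sum_nat_const cardC1 card_ord -subn1 => hs.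
have p01 := prod _ _ n01; have s01 := sumb _ _ n01.
have tle : t <= a by apply: ha.
have hc2 : 4 * t <= M.
  apply: c1 => //; apply: leq_trans (p01); rewrite -mulnA leq_mul2l leq_mul2r tle !orbT //.
have hc1 : 4 * a + 16 * t < 5 * M.
  by apply: c2 => //; rewrite -mulnA.
have fin := c3 Mpos hd hs hc1 hc2.
by split; [exact: ltnW | move=> _].
Qed.
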